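(* Let $G$ and $H$ be nontrivial finite groups and let $p$ be a prime. Then $G\times H$ contains an element of order $p$ whose centralizer in $G\times H$ is a $p$-group if and only if both $G$ contains an element of order $p$ whose centralizer in $G$ is a $p$-group and $H$ contains an element of order $p$ whose centralizer in $H$ is a $p$-group. *)

(* Defs.v *)
From mathcomp Require Import all_boot all_fingroup all_solvable.
Set Implicit Arguments. Unset Strict Implicit. Unset Printing Implicit Defensive.
Local Open Scope group_scope.

Definition has_p_elt_pcent (gT : finGroupType) (p : nat) (G : {set gT}) : Prop :=
  exists2 x, x \in G & (#[x] = p /\ p.-group 'C_G[x]).

(* Main.v *)
Require Import Defs.
From mathcomp Require Import all_boot all_fingroup all_solvable.
Local Open Scope group_scope.

Lemma expg_pair (gT hT : finGroupType) (x : gT * hT) n :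
  x ^+ n = (x.1 ^+ n, x.2 ^+ n).
Proof.
case: x => a b; elim: n => [|n IH] //=.
by rewrite !expgS IH.
Qed.

Lemma order_primeP (gT : finGroupType) (x : gT) p : prime p ->
  (#[x] = p) <-> (x ^+ p = 1 /\ x != 1).
Proof.
move=> pp; split.
  move=> ox; split; first by rewrite -ox expg_order.
  rewrite -order_eq1 ox; apply/eqP => p1; by rewrite p1 in pp.
case=> xp x1; apply/prime_nt_dvdP => //; first by rewrite order_eq1.
by rewrite order_dvdn xp.
Qed.

Lemma cent1_pair (gT hT : finGroupType) (g : gT) (h : hT) :
  'C[(g, h)] = setX 'C[g] 'C[h].
Proof.
apply/setP=> [[a b]]; rewrite in_setX.
by rewrite !cent1E xpair_eqE.
Qed.

Lemma pcent_pair (gT hT : finGroupType) p (g : gT) (h : hT) :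
  p.-group 'C_[set: gT * hT][(g, h)] =
  p.-group 'C_[set: gT][g] && p.-group 'C_[set: hT][h].
Proof.
by rewrite !setTI /pgroup cent1_pair cardsX pnatM.
Qed.

Lemma pgroup_has (gT : finGroupType) p : [set: gT] != 1 -> prime p ->
  p.-group [set: gT] -> has_p_elt_pcent p [set: gT].
Proof.
move=> nt pp pG.
case: (pgroup_pdiv pG nt) => _ pd _.
case: (Cauchy pp pd) => x xG ox.
exists x => //; split => //.
apply: pgroupS pG; exact: subsetIl.
Qed.

Theorem lemma4p5 (gT hT : finGroupType) (p : nat) :
  [set: gT] != 1%g -> [set: hT] != 1%g -> prime p ->
  has_p_elt_pcent p [set: gT * hT]
  <-> has_p_elt_pcent p [set: gT] /\ has_p_elt_pcent p [set: hT].
Proof.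
move=> ntG ntH pp; split.
  case=> [[g h]] _ [ox pC].
  move: pC; rewrite pcent_pair => /andP[pCg pCh].
  case/(order_primeP _ _ _ pp): ox; rewrite expg_pair /= => -[gp hp] x1.
  split.
    have [g1|g1] := eqVneq g 1.
      apply: pgroup_has => //; move: pCg; by rewrite g1 setTI cent11T.
    exists g; first exact: in_setT.
    by split => //; apply/(order_primeP _ _ _ pp).
  have [h1|h1] := eqVneq h 1.
    apply: pgroup_has => //; move: pCh; by rewrite h1 setTI cent11T.
  exists h; first exact: in_setT.
  by split => //; apply/(order_primeP _ _ _ pp).
case=> [[g _ [og pg]] [h _ [oh ph]]].
exists (g, h); first exact: in_setT.
split; last by rewrite pcent_pair pg ph.
case/(order_primeP _ _ _ pp): og => gp g1.
case/(order_primeP _ _ _ pp): oh => hp h1.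
apply/(order_primeP _ _ _ pp); rewrite expg_pair /= gp hp; split => //.
apply: contra g1 => /eqP e; case: e => -> _; by [].
Qed.
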